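(* For every integer $k \ge 1$, \[ \pi = 2^{k+1}\, i \sum_{m=1}^{\infty} \frac{1}{2m-1}\left( \frac{1}{\left(1 + 2i\, a_k/\sqrt{2 - a_{k-1}}\right)^{2m-1}} - \frac{1}{\left(1 - 2i\, a_k/\sqrt{2 - a_{k-1}}\right)^{2m-1}} \right), \] where the series converges.
   Context: Here $i$ is the imaginary unit. The nested radicals $a_k$ are defined by $a_0 = 0$ and $a_k = \sqrt{2 + a_{k-1}}$ for $k \ge 1$. Thus $a_1 = \sqrt{2}$, and in general $a_k = \sqrt{2+\sqrt{2+\cdots+\sqrt{2}}}$ with $k$ square roots. *)

(* Defs.v *)
From Stdlib Require Import Reals.
From Coquelicot Require Import Coquelicot.
Open Scope R_scope.

Fixpoint a (k : nat) : R :=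
  match k with
  | O => 0
  | S j => sqrt (2 + a j)
  end.

Definition xk (k : nat) : R := a k / sqrt (2 - a (k - 1)).

Definition term (k m : nat) : C :=
  let n := (2 * m - 1)%nat in
  Cmult (RtoC (/ INR n))
    (Cminus (Cinv (Cpow (Cplus (RtoC 1) (Cmult (RtoC (2 * xk k)) Ci)) n))
            (Cinv (Cpow (Cminus (RtoC 1) (Cmult (RtoC (2 * xk k)) Ci)) n))).

(* Main.v *)
Require Import Defs.
From Stdlib Require Import Reals Lra Lia.
From Coquelicot Require Import Coquelicot.
Open Scope R_scope.
Section S.
Variable x : R.
Hypothesis hx : 0 < x.

Definition zz : C := (1/(1+4*x^2), -2*x/(1+4*x^2)).
Definition DD t := (1-4*x^2-t^2)^2 + 16*x^2.
Definition VV t : C := ((1+4*x^2-t^2)/DD t, -2*x*(1+4*x^2+t^2)/DD t).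
Definition EE t := -(1/2) * atan (4*x*t/(1+4*x^2-t^2)).

Lemma DD_pos t : 0 < DD t.
Proof. unfold DD. pose proof (pow2_ge_0 (1-4*x^2-t^2)). nra. Qed.

Lemma VV_eq t : (VV t - RtoC (t^2) * (zz * zz * VV t))%C = zz.
Proof.
  pose proof (DD_pos t) as HD.
  assert (H1 : 1 + 4*x^2 <> 0) by nra.
  unfold VV, zz; apply injective_projections; simpl; unfold DD in *; field; lra.
Qed.

Fixpoint GS (N : nat) (t : R) : R :=
  match N with O => 0 | S M => GS M t + t^(2*M+1) * Im (Cpow zz (2*M+1)) / INR (2*M+1) end.
Fixpoint dGS (N : nat) (t : R) : R :=
  match N with O => 0 | S M => dGS M t + t^(2*M) * Im (Cpow zz (2*M+1)) end.

Lemma GS_derive N t : is_derive (GS N) t (dGS N t).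
Proof.
  induction N; simpl.
  - auto_derive; auto.
  - apply (is_derive_plus (GS N) (fun t => t^(2*N+1) * Im (Cpow zz (2*N+1)) / INR (2*N+1))); auto.
    auto_derive; auto.
    replace (N + (N+0) + 1)%nat with (S (N+(N+0))) by lia.
    simpl pred. rewrite S_INR. field. pose proof (pos_INR (N+(N+0))). lra.
Qed.

Lemma GS0 N : GS N 0 = 0.
Proof. induction N; simpl; auto. rewrite IHN. rewrite pow_i by lia. lra. Qed.

Lemma dGS_closed N t : dGS N t = snd (VV t - RtoC (t^(2*N)) * (Cpow zz (2*N) * VV t))%C.
Proof.
  pose proof (DD_pos t) as HD.
  assert (H1 : 1 + 4*x^2 <> 0) by nra.
  induction N.
  - simpl. unfold VV; simpl. field. lra.
  - change (dGS (S N) t) with (dGS N t + t^(2*N) * Im (Cpow zz (2*N+1))). rewrite IHN.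
    replace (2 * S N)%nat with (S (S (2*N))) by lia.
    replace (2 * N + 1)%nat with (S (2*N)) by lia.
    remember (2*N)%nat as M.
    change (Cpow zz (S (S M))) with (zz * (zz * Cpow zz M))%C.
    change (Cpow zz (S M)) with (zz * Cpow zz M)%C.
    change (t ^ (S (S M))) with (t * (t * t^M)).
    destruct (Cpow zz M) as [a b].
    unfold VV, zz, Im; simpl. unfold DD in *. field. lra.
Qed.

Lemma EE_derive t : 0 <= t <= 1 -> is_derive EE t (snd (VV t)).
Proof.
  intros Ht. pose proof (DD_pos t) as HD.
  assert (H2 : 1 + 4*x^2 - t^2 > 0) by nra.
  unfold EE. auto_derive. lra.
  unfold VV, DD in *; simpl. field. split; [|lra].
  assert (0 < (1 - 4 * (x * x) - t * t) * (1 - 4 * (x * x) - t * t) + 16 * (x * x)) by nra; lra.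
Qed.

Lemma Cmod_VV t : Cmod (VV t) ^ 2 = (1 + 4*x^2) / DD t.
Proof.
  pose proof (DD_pos t) as HD.
  rewrite Cmod2_alt. unfold VV, Re, Im; simpl. unfold DD in *. field. lra.
Qed.

Definition KK := (1 + 4*x^2) / (4*x).

Lemma Cmod_VV_le t : Cmod (VV t) <= KK.
Proof.
  pose proof (DD_pos t) as HD. pose proof (Cmod_VV t) as H.
  pose proof (Cmod_ge_0 (VV t)).
  assert (HK : 0 < KK) by (unfold KK; apply Rdiv_lt_0_compat; nra).
  assert (Cmod (VV t) ^ 2 <= KK ^ 2).
  { rewrite H. unfold KK, DD. 
    apply Rle_trans with ((1+4*x^2)/(16*x^2)).
    - apply Rmult_le_compat_l. nra. apply Rinv_le_contravar. nra.
      pose proof (pow2_ge_0 (1-4*x^2-t^2)). nra.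
    - replace (((1+4*x^2)/(4*x))^2) with ((1+4*x^2)*(1+4*x^2)/(16*x^2)) by (field; lra).
      unfold Rdiv. apply Rmult_le_compat_r. apply Rlt_le, Rinv_0_lt_compat; nra. nra. }
  nra.
Qed.

Lemma im_le (u : C) : Rabs (snd u) <= Cmod u.
Proof.
  pose proof (Cmod_ge_0 u). pose proof (Rabs_pos (snd u)).
  assert (Rabs (snd u) ^ 2 <= Cmod u ^ 2).
  { rewrite pow2_abs, Cmod2_alt. pose proof (pow2_ge_0 (Re u)). unfold Im. lra. }
  nra.
Qed.

Lemma GS_bound N : Rabs (GS N 1 - EE 1) <= Cmod zz ^ (2*N) * KK.
Proof.
  assert (HD : forall t, 0 <= t <= 1 -> is_derive (fun t => GS N t - EE t) t (dGS N t - snd (VV t))).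
  { intros t Ht. apply (is_derive_minus (GS N) EE). apply GS_derive. apply EE_derive; lra. }
  destruct (MVT_gen (fun t => GS N t - EE t) 0 1 (fun t => dGS N t - snd (VV t))) as [c [Hc Heq]].
  - intros t Ht. rewrite Rmin_left, Rmax_right in Ht by lra. apply HD; lra.
  - intros t Ht. rewrite Rmin_left, Rmax_right in Ht by lra.
    apply continuity_pt_filterlim. apply (ex_derive_continuous (fun t => GS N t - EE t)).
    eexists. apply HD; lra.
  - rewrite Rmin_left, Rmax_right in Hc by lra.
    rewrite GS0 in Heq. unfold EE at 2 in Heq.
    replace (4 * x * 0 / (1 + 4 * x ^ 2 - 0 ^ 2)) with 0 in Heq by (field; nra).
    rewrite atan_0 in Heq.
    replace (GS N 1 - EE 1) with (dGS N c - snd (VV c)) by lra.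
    rewrite dGS_closed.
    set (u := (Cpow zz (2*N) * VV c)%C).
    replace (snd (VV c - RtoC (c ^ (2 * N)) * u)%C - snd (VV c)) with (- (c^(2*N) * snd u))
      by (destruct u; simpl; ring).
    rewrite Rabs_Ropp, Rabs_mult.
    assert (Rabs (snd u) <= Cmod zz ^ (2*N) * KK).
    { apply Rle_trans with (Cmod u). apply im_le. unfold u. rewrite Cmod_mult, Cmod_pow.
      apply Rmult_le_compat_l. apply pow_le, Cmod_ge_0. apply Cmod_VV_le. }
    assert (Rabs (c ^ (2*N)) <= 1).
    { rewrite Rabs_right. rewrite <- (pow1 (2*N)). apply pow_incr. lra. apply Rle_ge, pow_le. lra. }
    pose proof (Rabs_pos (snd u)). pose proof (Rabs_pos (c ^ (2*N))).
    nra.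
Qed.

Lemma EE1 : EE 1 = -(1/2) * atan (1/x).
Proof. unfold EE. f_equal. f_equal. field. repeat split; nra. Qed.

Lemma Cmod_zz : Cmod zz < 1.
Proof.
  pose proof (Cmod_ge_0 zz).
  assert (Cmod zz ^ 2 < 1).
  { replace (Cmod zz ^ 2) with (1 / (1 + 4*x^2)).
    apply (Rmult_lt_reg_r (1 + 4*x^2)). nra. unfold Rdiv. rewrite Rmult_assoc, Rinv_l by nra. nra.
    rewrite Cmod2_alt. unfold zz, Re, Im; simpl. field. nra. }
  nra.
Qed.

Definition bb (n : nat) : R := Im (Cpow zz (2*n+1)) / INR (2*n+1).

Lemma sum_bb N : sum_n bb N = GS (S N) 1.
Proof.
  induction N.
  - rewrite sum_O. simpl GS. unfold bb. simpl. lra.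
  - rewrite sum_Sn, IHN. change (GS (S (S N)) 1) with (GS (S N) 1 + 1^(2*(S N)+1) * Im (Cpow zz (2*(S N)+1)) / INR (2*(S N)+1)).
    rewrite pow1. rewrite Rmult_1_l. reflexivity.
Qed.

Lemma Cmod_0r r : Cmod (0, r) = Rabs r.
Proof. unfold Cmod; simpl. rewrite <- sqrt_Rsqr_abs. f_equal. unfold Rsqr. ring. Qed.

Lemma sum_C N : sum_n (fun n => (0, 2 * bb n) : C) N = (0, 2 * sum_n bb N).
Proof.
  induction N.
  - rewrite !sum_O. reflexivity.
  - rewrite !sum_Sn, IHN. change (@plus R_AbelianMonoid) with Rplus.
    apply injective_projections; simpl; ring.
Qed.

Lemma series_C : is_series (fun n => (0, 2 * bb n) : C) (0, - atan (1/x)).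
Proof.
  apply filterlim_locally. intros eps.
  assert (HK : 0 < KK) by (unfold KK; apply Rdiv_lt_0_compat; nra).
  assert (Hy : 0 < eps / (2 * KK)) by (apply Rdiv_lt_0_compat; [apply cond_pos | lra]).
  assert (Hz : Rabs (Cmod zz) < 1) by (rewrite Rabs_right; [apply Cmod_zz | apply Rle_ge, Cmod_ge_0]).
  destruct (pow_lt_1_zero (Cmod zz) Hz _ Hy) as [N0 HN0].
  exists N0. intros n Hn.
  apply C_NormedModule_mixin_compat1.
  rewrite sum_C, sum_bb.
  pose proof (GS_bound (S n)) as Hb. rewrite EE1 in Hb.
  specialize (HN0 (2 * S n)%nat ltac:(lia)).
  rewrite Rabs_right in HN0 by (apply Rle_ge, pow_le, Cmod_ge_0).
  set (g := GS (S n) 1) in *. clearbody g.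
  match goal with |- Cmod ?m < _ => assert (Hm : m = (0, 2 * (g - -(1/2) * atan (1/x)))) end.
  { unfold minus, plus, opp; cbn. unfold plus, opp; cbn. apply injective_projections; cbn; lra. }
  rewrite Hm.
  rewrite Cmod_0r, Rabs_mult, (Rabs_right 2) by lra.
  apply Rle_lt_trans with (2 * (Cmod zz ^ (2 * S n) * KK)). lra.
  apply (Rmult_lt_compat_l (2 * KK)) in HN0; [|lra].
  replace (2 * KK * (eps / (2 * KK))) with (pos eps) in HN0 by (field; lra). lra.
Qed.
End S.

Lemma theta_bounds j : 0 < PI / 2^(j+2) < PI / 2.
Proof.
  pose proof PI_RGT_0.
  pose proof (pow_R1_Rle 2 j ltac:(lra)) as Hj.
  rewrite pow_add. simpl pow. split.
  - apply Rdiv_lt_0_compat; nra.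
  - apply Rmult_lt_compat_l. lra. apply Rinv_lt_contravar; nra.
Qed.

Lemma a_cos k : a k = 2 * cos (PI / 2^(k+1)).
Proof.
  induction k.
  - simpl. replace (PI / (2 * 1)) with (PI/2) by field. rewrite cos_PI2. ring.
  - simpl a. rewrite IHk.
    set (t := PI / 2^(S k + 1)).
    assert (Ht : PI / 2^(k+1) = 2 * t).
    { unfold t. replace (S k + 1)%nat with (S (k+1)) by lia. simpl pow. field. apply pow_nonzero. lra. }
    rewrite Ht, cos_2a_cos.
    destruct (theta_bounds k) as [H1 H2].
    assert (0 <= cos t).
    { unfold t. replace (S k + 1)%nat with (k+2)%nat by lia. apply cos_ge_0; lra. }
    replace (2 + 2 * (2 * cos t * cos t - 1)) with ((2 * cos t)^2) by ring.
    apply sqrt_pow2. lra.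
Qed.

Lemma xk_eq j : xk (S j) = cos (PI / 2^(j+2)) / sin (PI / 2^(j+2)).
Proof.
  unfold xk. replace (S j - 1)%nat with j by lia.
  rewrite !a_cos. set (t := PI / 2^(j+2)).
  replace (S j + 1)%nat with (j+2)%nat by lia. fold t.
  assert (Ht : PI / 2^(j+1) = 2 * t).
  { unfold t. replace (j + 2)%nat with (S (j+1)) by lia. simpl pow. field. apply pow_nonzero. lra. }
  rewrite Ht, cos_2a_sin.
  destruct (theta_bounds j) as [H1 H2]. fold t in H1, H2.
  assert (0 < sin t) by (apply sin_gt_0; lra).
  replace (2 - 2 * (1 - 2 * sin t * sin t)) with ((2 * sin t)^2) by ring.
  rewrite sqrt_pow2 by lra. field. lra.
Qed.

Lemma Cinv_pow (w : C) n : w <> 0%C -> Cinv (Cpow w n) = Cpow (Cinv w) n.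
Proof.
  intros Hw. induction n.
  - simpl. apply injective_projections; simpl; field.
  - simpl. rewrite <- IHn. assert (Cpow w n <> 0%C).
    { apply Cmod_gt_0. rewrite Cmod_pow. apply pow_lt. apply Cmod_gt_0. auto. }
    field. split; auto.
Qed.

Lemma term_eq x n : 0 < x ->
  Cmult (RtoC (/ INR (2 * S n - 1)))
    (Cminus (Cinv (Cpow (Cplus (RtoC 1) (Cmult (RtoC (2 * x)) Ci)) (2 * S n - 1)))
            (Cinv (Cpow (Cminus (RtoC 1) (Cmult (RtoC (2 * x)) Ci)) (2 * S n - 1))))
  = ((0, 2 * bb x n) : C).
Proof.
  intros hx.
  assert (Hp : Cplus (RtoC 1) (Cmult (RtoC (2 * x)) Ci) = (1, 2*x)) by (apply injective_projections; simpl; ring).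
  assert (Hm : Cminus (RtoC 1) (Cmult (RtoC (2 * x)) Ci) = (1, -(2*x))) by (apply injective_projections; simpl; ring).
  assert (Hp0 : ((1, 2*x) : C) <> 0%C).
  { intro H. apply (f_equal fst) in H. simpl in H. lra. }
  assert (Hm0 : ((1, -(2*x)) : C) <> 0%C).
  { intro H. apply (f_equal fst) in H. simpl in H. lra. }
  rewrite Hp, Hm, !Cinv_pow by auto.
  assert (E1 : Cinv (1, 2*x) = zz x).
  { unfold zz. apply injective_projections; simpl; field; nra. }
  assert (E2 : Cinv (1, -(2*x)) = Cconj (zz x)).
  { unfold zz, Cconj. apply injective_projections; simpl; field; nra. }
  rewrite E1, E2, <- Cpow_conj.
  replace (2 * S n - 1)%nat with (2 * n + 1)%nat by lia.
  unfold bb.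
  assert (HI : INR (2*n+1) <> 0).
  { replace (2*n+1)%nat with (S (2*n)) by lia. rewrite S_INR. pose proof (pos_INR (2*n)). lra. }
  destruct (Cpow (zz x) (2*n+1)) as [p q].
  unfold Cconj, Im. apply injective_projections; simpl; field; auto.
Qed.

Theorem mainTheorem1 (k : nat) (hk : (1 <= k)%nat) :
  exists s : C,
    is_series (fun n : nat => term k (S n)) s /\
    RtoC PI = Cmult (Cmult (RtoC (2 ^ (k + 1))) Ci) s.
Proof.
  destruct k as [|j]; [lia|].
  destruct (theta_bounds j) as [H1 H2].
  set (t := PI / 2^(j+2)) in *.
  assert (Hs : 0 < sin t) by (apply sin_gt_0; lra).
  assert (Hc : 0 < cos t) by (apply cos_gt_0; lra).
  assert (Hx : 0 < xk (S j)) by (rewrite xk_eq; apply Rdiv_lt_0_compat; auto).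
  assert (Hat : atan (1 / xk (S j)) = t).
  { rewrite xk_eq. fold t. replace (1 / (cos t / sin t)) with (tan t) by (unfold tan; field; lra).
    apply atan_tan. lra. }
  exists ((0, - atan (1 / xk (S j))) : C). split.
  - apply is_series_ext with (a := fun n => (0, 2 * bb (xk (S j)) n) : C).
    + intros n. unfold term. symmetry. apply term_eq. auto.
    + apply series_C. auto.
  - rewrite Hat. unfold t. replace (S j + 1)%nat with (j+2)%nat by lia.
    apply injective_projections; simpl; field; apply pow_nonzero; lra.
Qed.
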